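(* Let $H_1$ and $H_2$ be two contextuality scenarios with $H_1\sim_{vcz}H_2$. Then any choice of $H_1^{vcz}$ and any choice of $H_2^{vcz}$ are observationally equivalent.
   Context: A contextuality scenario is a hypergraph $H=(V,E)$ (with $V$ finite and $E$ a set of subsets of $V$) with no isolated vertex, i.e. $V=\bigcup_{e\in E}e$. A probabilistic model on $H$ is a function $p:V\to[0,1]$ with $\sum_{v\in e}p(v)=1$ for every $e\in E$; the set of such models is $\mathcal{G}(H)$, and for $W\subseteq V$ one writes $p(W)=\sum_{v\in W}p(v)$. For $W\subseteq V$, the induced sub-hypergraph is $H_W=(W,\{e\cap W: e\in E\})$. Two scenarios $H=(V,E)$, $H'=(V',E')$ are observationally equivalent if there is a bijection $\phi:V'\to V$ with $\mathcal{G}(H')=\{p\circ\phi: p\in\mathcal{G}(H)\}$. Virtual equivalence: a set $e\subseteq V$ is a virtual edge of $H$ if $\sum_{v\in e}p(v)=1$ for all $p\in\mathcal{G}(H)$; $H$ is virtually included in any $H'=(V,E\cup E')$ where $E'$ consists only of virtual edges of $H$; virtual equivalence is the symmetric closure of this relation. The completion $\overline{H}$ of $H$ is the virtually equivalent scenario with the most edges (i.e. with all virtual edges added). Equivalence by contraction: a nonempty $W\subseteq V$ can be contracted in $H$ if for every $e\in E$, either $W\subseteq e$ or $W\cap e=\emptyset$. For every nonempty $W'\subseteq W$, the induced sub-hypergraph $H_{V\setminus(W\setminus W')}$ is a contraction of $H$; equivalence by contraction is the symmetric transitive closure of this relation. Zero equivalence: for $W\subseteq V$, $H$ zero-reduces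 to $H_W$ if $p(v)=0$ for all $p\in\mathcal{G}(H)$ and all $v\in V\setminus W$ (the vertices of $V\setminus W$ are then called zero weighted); zero equivalence is the symmetric closure of zero-reduction. VCZ equivalence $\sim_{vcz}$ is the smallest equivalence relation containing virtual equivalence, equivalence by contraction and zero equivalence. For a scenario $H$, a choice of $H^{vcz}=(V^{vcz},E^{vcz})$ is a scenario obtained from $H$ by removing all zero weighted vertices, then contracting the remaining vertices so that $|V^{vcz}|$ is minimal, then taking the completion and removing edges (by virtual equivalence) so that $|E^{vcz}|$ is minimal. *)

(* Defs.v *)
From HB Require Import structures.
From Stdlib Require Import Relation_Operators.
From mathcomp Require Import all_boot all_order all_algebra.
From mathcomp Require Import boolp reals.

Set Implicit Arguments.
Unset Strict Implicit.
Unset Printing Implicit Defensive.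

Import Order.TTheory GRing.Theory Num.Theory.
Local Open Scope ring_scope.

Definition scenario := {V : finType & {set {set V}}}.

Definition mkScen (V : finType) (E : {set {set V}}) : scenario :=
  existT (fun V : finType => {set {set V}}) V E.

Definition no_isolated (V : finType) (E : {set {set V}}) : bool :=
  \bigcup_(e in E) e == [set: V].

(* Induced sub-hypergraph H_W = (W, {e cap W : e in E}); W is realised as the
   finite subtype {x | x \in W}. *)
Definition induced (V : finType) (E : {set {set V}}) (W : {set V}) : scenario :=
  @mkScen {x : V | x \in W}
    [set [set x : {x : V | x \in W} | val x \in e] | e : {set V} in E].

Definition contractible (V : finType) (E : {set {set V}}) (W : {set V}) : bool :=
  (W != set0) && [forall e in E, (W \subset e) || [disjoint W & e]].

Section Models.
Variable R : realType.

Definition is_model (V : finType) (E : {set {set V}}) (p : V -> R) : Prop :=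
  (forall v, 0 <= p v <= 1) /\ (forall e, e \in E -> \sum_(v in e) p v = 1).

Definition virtual_edge (V : finType) (E : {set {set V}}) (e : {set V}) : Prop :=
  forall p, is_model E p -> \sum_(v in e) p v = 1.

Definition virt_incl (V : finType) (E F : {set {set V}}) : Prop :=
  exists E' : {set {set V}}, F = E :|: E' /\ (forall e, e \in E' -> virtual_edge E e).

Definition completion (V : finType) (E : {set {set V}}) : {set {set V}} :=
  [set e | `[< virtual_edge E e >]].

Definition zero_weighted (V : finType) (E : {set {set V}}) (v : V) : Prop :=
  forall p, is_model E p -> p v = 0.

Definition obs_equiv (H H' : scenario) : Prop :=
  exists phi : projT1 H' -> projT1 H, bijective phi /\
    forall q : projT1 H' -> R,
      is_model (projT2 H') q <->
      exists p : projT1 H -> R, is_model (projT2 H) p /\ q =1 (p \o phi).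

Inductive contr_step : scenario -> scenario -> Prop :=
| CStep (V : finType) (E : {set {set V}}) (W W' : {set V}) :
    no_isolated E -> contractible E W -> W' \subset W -> W' != set0 ->
    contr_step (mkScen E) (induced E (~: (W :\: W'))).

(* Generating steps of VCZ equivalence.  The relabelling step is derivable in
   the paper's set-based setting; it is needed here because
   induced sub-hypergraphs live on subtypes. *)
Inductive vcz_step : scenario -> scenario -> Prop :=
| VirtStep (V : finType) (E F : {set {set V}}) :
    no_isolated E -> no_isolated F -> virt_incl E F ->
    vcz_step (mkScen E) (mkScen F)
| ContrStep (H H' : scenario) : contr_step H H' -> vcz_step H H'
| ZeroStep (V : finType) (E : {set {set V}}) (W : {set V}) :
    no_isolated E -> (forall v, v \notin W -> zero_weighted E v) ->
    vcz_step (mkScen E) (induced E W)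
| RelabelStep (V V' : finType) (E : {set {set V}}) (f : V' -> V) :
    no_isolated E -> bijective f ->
    vcz_step (mkScen E) (@mkScen V' [set [set x | f x \in e] | e : {set V} in E]).

Definition vcz_equiv : scenario -> scenario -> Prop :=
  clos_refl_sym_trans scenario vcz_step.

Definition contr_reach : scenario -> scenario -> Prop :=
  clos_refl_trans scenario contr_step.

Definition is_vcz_choice (H K : scenario) : Prop :=
  exists Z : {set projT1 H},
    (forall v, v \in Z <-> ~ zero_weighted (projT2 H) v) /\
    exists H1 : scenario,
      contr_reach (induced (projT2 H) Z) H1 /\
      (forall H', contr_reach (induced (projT2 H) Z) H' ->
                  #|projT1 H1| <= #|projT1 H'|)%N /\
      exists EK : {set {set projT1 H1}},
        K = mkScen EK /\ no_isolated EK /\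
        virt_incl EK (completion (projT2 H1)) /\
        (forall EK' : {set {set projT1 H1}},
            no_isolated EK' -> virt_incl EK' (completion (projT2 H1)) ->
            #|EK| <= #|EK'|)%N.

End Models.

(* Main.v *)
Require Import Defs.
From mathcomp Require Import all_boot all_order all_algebra.
From mathcomp Require Import boolp reals.
From mathcomp Require Import lra.
From Stdlib Require Import Relation_Operators.

Set Implicit Arguments.
Unset Strict Implicit.
Unset Printing Implicit Defensive.
Import Order.TTheory GRing.Theory Num.Theory.
Local Open Scope ring_scope.

Section Main.
Variable R : realType.

Definition twin (V : finType) (E : {set {set V}}) (v w : V) : Prop :=
  forall e, e \in E -> (v \in e) = (w \in e).

Definition pres (V : finType) (E : {set {set V}}) (A : finType) (c : V -> option A) : Prop :=
  [/\ (forall v, c v = None <-> zero_weighted R E v),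
      (forall v w, c v <> None -> (c w = c v <-> twin E v w)) &
      (forall a, exists v, c v = Some a)].

Definition cmod (V : finType) (E : {set {set V}}) (A : finType) (c : V -> option A)
  (r : A -> R) : Prop :=
  exists p, is_model E p /\ forall a, r a = \sum_(v | c v == Some a) p v.

Definition OE (A B : finType) (MA : (A -> R) -> Prop) (MB : (B -> R) -> Prop) : Prop :=
  exists phi : B -> A, bijective phi /\
    forall q, MB q <-> exists p, MA p /\ q =1 (p \o phi).

Lemma OE_id (A : finType) (MA MB : (A -> R) -> Prop) :
  (forall r, MA r <-> MB r) -> OE MA MB.
Proof.
move=> h; exists id; split; first exact: (Bijective (g:=id)).
move=> q; split.
- by move=> /h Mq; exists q.
- by case=> p [Mp eq]; apply/h; rewrite (funext eq).
Qed.

Lemma OE_sym (A B : finType) (MA : (A -> R) -> Prop) (MB : (B -> R) -> Prop) :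
  OE MA MB -> OE MB MA.
Proof.
case=> phi [[psi K1 K2] h]; exists psi; split; first exact: (Bijective K2 K1).
move=> p; split.
- move=> Mp; exists (p \o phi); split; first by apply/h; exists p.
  by move=> a /=; rewrite K2.
- case=> q [Mq eq]; have [p' [Mp' eq']] := (h q).1 Mq.
  have -> : p = p'; last by [].
  by apply: funext => a; rewrite eq /= eq' /= K2.
Qed.

Lemma OE_trans (A B C : finType) (MA : (A -> R) -> Prop) (MB : (B -> R) -> Prop)
  (MC : (C -> R) -> Prop) : OE MA MB -> OE MB MC -> OE MA MC.
Proof.
case=> f [bf hf]; case=> g [bg hg]; exists (f \o g); split.
  exact: bij_comp.
move=> s; split.
- move=> /hg [q [Mq eq]]; have [p [Mp eq']] := (hf q).1 Mq.
  by exists p; split => // c; rewrite eq /= eq'.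
- case=> p [Mp eq]; apply/hg; exists (p \o f); split.
    by apply/hf; exists p.
  by move=> c; rewrite eq.
Qed.

Lemma noisoP (V : finType) (E : {set {set V}}) :
  no_isolated E -> forall v, exists2 e, e \in E & v \in e.
Proof.
move=> /eqP h v; have : v \in \bigcup_(e in E) e by rewrite h inE.
by case/bigcupP=> e he hv; exists e.
Qed.

Lemma noisoI (V : finType) (E : {set {set V}}) :
  (forall v, exists2 e, e \in E & v \in e) -> no_isolated E.
Proof.
move=> h; apply/eqP/setP=> v; rewrite inE; have [e he hv] := h v.
by apply/bigcupP; exists e.
Qed.

Lemma model_of (V : finType) (E : {set {set V}}) (f : V -> R) :
  no_isolated E -> (forall v, 0 <= f v) -> (forall e, e \in E -> \sum_(v in e) f v = 1) ->
  is_model E f.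
Proof.
move=> ni f0 fs; split => // v; rewrite f0 /=.
have [e he hv] := noisoP ni v.
rewrite -(fs e he) (bigD1 v) //= lerDl; apply: sumr_ge0 => u _; exact: f0.
Qed.

Lemma sum_ind (V : finType) (P : pred V) (w : V) (k : R) :
  \sum_(v | P v) ((v == w)%:R * k) = (P w)%:R * k.
Proof.
rewrite big_mkcond /= (bigD1 w) //= eqxx big1 ?addr0.
  by case: (P w); rewrite ?mul1r ?mul0r.
by move=> u /negbTE ->; rewrite mul0r; case: (P u).
Qed.


Definition pb (V V' : finType) (g : V' -> V) (E : {set {set V}}) : {set {set V'}} :=
  [set [set x | g x \in e] | e : {set V} in E].

Section PB.
Variables (V V' : finType) (g : V' -> V) (ginj : injective g) (E : {set {set V}}).

Lemma sum_pb (h : V -> R) (P : pred V) :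
  (forall v, (forall x, g x != v) -> h v = 0) ->
  \sum_(x | P (g x)) h (g x) = \sum_(v | P v) h v.
Proof.
move=> h0; rewrite (partition_big g P) //=; apply: eq_bigr => v Pv.
case: (pickP (fun x => g x == v)) => [x /eqP gx|nx].
- rewrite (big_pred1 x) ?gx // => y /=; rewrite /pred1 /=.
  apply/andP/eqP => [[_ /eqP]|->]; first by rewrite -gx => /ginj.
  by rewrite gx Pv eqxx.
- rewrite big_pred0 ?h0 // => y; first by rewrite nx.
  by rewrite nx andbF.
Qed.

Definition ext (q : V' -> R) (v : V) : R :=
  if [pick x | g x == v] is Some x then q x else 0.

Lemma ext_g q x : ext q (g x) = q x.
Proof.
rewrite /ext; case: pickP => [y /eqP /ginj -> //|].
by move=> /(_ x); rewrite eqxx.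
Qed.

Lemma ext_out q v : (forall x, g x != v) -> ext q v = 0.
Proof.
by move=> h; rewrite /ext; case: pickP => [y|//]; rewrite (negbTE (h y)).
Qed.

Lemma pb_modelP (q : V' -> R) :
  is_model (pb g E) q <->
  (forall x, 0 <= q x <= 1) /\ (forall e, e \in E -> \sum_(x | g x \in e) q x = 1).
Proof.
split=> [[b s]|[b s]]; split=> // e.
- move=> he; rewrite -(s [set x | g x \in e]); last by apply/imsetP; exists e.
  by apply: eq_bigl => x; rewrite inE.
- case/imsetP=> e0 he0 ->; rewrite -(s e0 he0).
  by apply: eq_bigl => x; rewrite inE.
Qed.

Lemma ext_model q : is_model (pb g E) q -> is_model E (ext q).
Proof.
case/pb_modelP=> b s; split.
- move=> v; rewrite /ext; case: pickP => [x _|_]; first exact: b.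
  by rewrite lexx ler01.
- move=> e he; rewrite -(s e he) -(@sum_pb _ (mem e)); last exact: ext_out.
  by apply: eq_bigr => x _; rewrite ext_g.
Qed.

Lemma pb_twin x y : twin (pb g E) x y <-> twin E (g x) (g y).
Proof.
split=> h e he.
- have := h [set x | g x \in e]; rewrite !inE; apply; apply/imsetP; by exists e.
- by case/imsetP: he => e0 he0 ->; rewrite !inE; apply: h.
Qed.

Lemma pb_noiso : no_isolated E -> no_isolated (pb g E).
Proof.
move=> ni; apply: noisoI => x; have [e he hv] := noisoP ni (g x).
exists [set x | g x \in e]; last by rewrite inE.
by apply/imsetP; exists e.
Qed.

Lemma pb_pres (A : finType) (c : V -> option A) :
  pres E c ->
  (forall p : V -> R, is_model E p -> exists q : V' -> R, [/\ is_model (pb g E) q,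
     (forall x, p (g x) <= q x) &
     forall a, \sum_(x | c (g x) == Some a) q x = \sum_(v | c v == Some a) p v]) ->
  (forall a, exists x, c (g x) = Some a) ->
  pres (pb g E) (c \o g) /\ (forall r, cmod (pb g E) (c \o g) r <-> cmod E c r).
Proof.
case=> [c1 c2 c3] H2 H3.
have zero_eq x : zero_weighted R (pb g E) x <-> zero_weighted R E (g x).
  split=> hz.
  - move=> p Mp; have [q [Mq le _]] := H2 p Mp.
    have := le x; rewrite (hz q Mq) => le0.
    have [ge0 _] := andP (Mp.1 (g x)).
    by apply/eqP; rewrite eq_le le0 ge0.
  - by move=> q Mq; rewrite -(ext_g q) (hz _ (ext_model Mq)).
split; first split.
- by move=> x /=; rewrite zero_eq.
- move=> x y /= hx; rewrite pb_twin; exact: c2.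
- exact: H3.
move=> r; split.
- case=> q [Mq rq]; exists (ext q); split; first exact: ext_model.
  move=> a; rewrite rq -(@sum_pb _ (fun v => c v == Some a)); last exact: ext_out.
  by apply: eq_bigr => x _; rewrite ext_g.
- case=> p [Mp rp]; have [q [Mq _ sq]] := H2 p Mp.
  by exists q; split => // a; rewrite rp sq.
Qed.

End PB.


Section Steps.

Lemma twin_refl (V : finType) (E : {set {set V}}) v : twin E v v.
Proof. by []. Qed.
Lemma twin_sym (V : finType) (E : {set {set V}}) v w : twin E v w -> twin E w v.
Proof. by move=> h e he; rewrite h. Qed.
Lemma twin_trans (V : finType) (E : {set {set V}}) u v w :
  twin E u v -> twin E v w -> twin E u w.
Proof. by move=> h1 h2 e he; rewrite h1 ?h2. Qed.

Definition swap (V : eqType) (v w u : V) := if u == v then w else if u == w then v else u.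

Lemma swapK (V : eqType) (v w : V) : involutive (swap v w).
Proof.
move=> u; rewrite /swap; case: (eqVneq u v) => [->|uv].
  by case: (eqVneq w v) => [->|wv]; rewrite ?eqxx.
case: (eqVneq u w) => [->|uw]; first by rewrite eqxx.
by rewrite (negbTE uv) (negbTE uw).
Qed.

Lemma twin_nz (V : finType) (E : {set {set V}}) v w :
  ~ zero_weighted R E v -> twin E v w -> ~ zero_weighted R E w.
Proof.
move=> nzv tw zw; apply: nzv => p Mp.
have sinj : injective (swap v w) := inv_inj (swapK v w).
have Mp' : is_model E (p \o swap v w).
  split=> [u|e he]; first exact: Mp.1.
  rewrite -(Mp.2 e he) [RHS](reindex_inj sinj); apply: eq_bigl => u.
  rewrite /swap; case: (eqVneq u v) => [->|_]; first by rewrite tw.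
  by case: (eqVneq u w) => [->|_]; first by rewrite tw.
have := zw _ Mp'; rewrite /= /swap eqxx.
by case: (eqVneq w v) => [->|_]; rewrite ?eqxx.
Qed.

Lemma twin_virt (V : finType) (E : {set {set V}}) v w e :
  no_isolated E -> twin E v w -> virtual_edge R E e -> ~ zero_weighted R E v ->
  (v \in e) = (w \in e).
Proof.
move=> ni tw ve nzv.
have key : forall p : V -> R, is_model E p ->
  \sum_(u in e) p u + (w \in e)%:R * p v - (v \in e)%:R * p v = 1.
  move=> p Mp; have [b s] : _ /\ _ := Mp.
  case: (eqVneq v w) => [<-|vw]; first by rewrite (ve p Mp) addrK.
  set p' := fun u => p u + (u == w)%:R * p v - (u == v)%:R * p v.
  have sp' : forall e0 : {set V}, \sum_(u in e0) p' u =
      \sum_(u in e0) p u + (w \in e0)%:R * p v - (v \in e0)%:R * p v.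
    move=> e0; rewrite /p' sumrB big_split /= !sum_ind //.
  have Mp' : is_model E p'.
    apply: model_of => // [u|e0 he0].
    + rewrite /p'; case: (eqVneq u v) => [->|uv].
        by rewrite (negbTE vw) mul0r addr0 mul1r subrr.
      rewrite mul0r subr0; apply: addr_ge0; first by case/andP: (b u).
      by apply: mulr_ge0; [case: (u == w)|case/andP: (b v)].
    + rewrite sp' -(tw e0 he0) s // addrK //.
  by rewrite -sp' (ve _ Mp').
apply: contra_notP nzv => ne p Mp; have := key p Mp; rewrite (ve p Mp).
by move: ne; case: (v \in e); case: (w \in e) => //= _; rewrite ?mul1r ?mul0r => h; lra.
Qed.

End Steps.

Lemma virt_models (V : finType) (E F : {set {set V}}) (p : V -> R) :
  virt_incl R E F -> (is_model E p <-> is_model F p).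
Proof.
case=> E' [-> hv]; split=> [[b s]|[b s]]; split=> // e he.
- by case/setUP: he => [/s|/hv]; [|apply].
- by apply: s; rewrite inE he.
Qed.

Lemma fwd_virt (V : finType) (E F : {set {set V}}) (A : finType) (c : V -> option A) :
  no_isolated E -> virt_incl R E F -> pres E c ->
  pres F c /\ (forall r, cmod F c r <-> cmod E c r).
Proof.
move=> ni vi [c1 c2 c3].
have zeq v : zero_weighted R F v <-> zero_weighted R E v.
  by split=> h p Mp; apply: h; apply/(virt_models p vi).
split; first split => //.
- by move=> v; rewrite zeq.
- move=> v w cv; rewrite c2 //; split=> tw e he.
  + have [E' [FE hv]] := vi; move: he; rewrite FE => /setUP [he|he]; first exact: tw.
    apply: twin_virt ni tw (hv e he) _; by rewrite -c1.
  + by apply: tw; have [E' [-> _]] := vi; rewrite inE he.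
- move=> r; split; case=> p [Mp rp]; exists p; split => //; exact/(virt_models p vi).
Qed.

Lemma fwd_relabel (V V' : finType) (E : {set {set V}}) (f : V' -> V) (A : finType)
  (c : V -> option A) :
  bijective f -> pres E c ->
  pres (pb f E) (c \o f) /\ (forall r, cmod (pb f E) (c \o f) r <-> cmod E c r).
Proof.
move=> bf pc; have finj := bij_inj bf; have [f' K1 K2] := bf.
have nout (h : V -> R) v : (forall x, f x != v) -> h v = 0.
  by move=> /(_ (f' v)); rewrite K2 eqxx.
apply: pb_pres => //.
- move=> p Mp; exists (p \o f); split => //.
  + apply/pb_modelP; split=> [x|e he]; first exact: Mp.1.
    by rewrite (@sum_pb _ _ _ finj p (mem e)) ?Mp.2 //; apply: nout.
  + by move=> a; rewrite (@sum_pb _ _ _ finj p (fun v => c v == Some a)) //; apply: nout.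
- move=> a; have [_ _ c3] := pc; have [v cv] := c3 a; exists (f' v); by rewrite /= K2.
Qed.

Lemma fwd_zero (V : finType) (E : {set {set V}}) (W : {set V}) (A : finType)
  (c : V -> option A) :
  (forall v, v \notin W -> zero_weighted R E v) -> pres E c ->
  pres (pb (fun x : {x : V | x \in W} => val x) E) (c \o val) /\
  (forall r, cmod (pb (fun x : {x : V | x \in W} => val x) E) (c \o val) r <-> cmod E c r).
Proof.
move=> zW pc; have vinj : injective (fun x : {x : V | x \in W} => val x) := val_inj.
have nout (p : V -> R) v : is_model E p -> (forall x : {x : V | x \in W}, val x != v) -> p v = 0.
  move=> Mp h; apply: zW => // ; apply/negP => vW.
  by have := h (exist _ v vW); rewrite eqxx.
apply: pb_pres => //.
- move=> p Mp; exists (p \o val); split => //.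
  + apply/pb_modelP; split=> [x|e he]; first exact: Mp.1.
    by rewrite (@sum_pb _ _ _ vinj p (mem e)) ?Mp.2 // => v; apply: nout.
  + by move=> a; rewrite (@sum_pb _ _ _ vinj p (fun v => c v == Some a)) // => v; apply: nout.
- move=> a; have [c1 _ c3] := pc; have [v cv] := c3 a.
  have vW : v \in W.
    by apply/negPn/negP => /zW /c1; rewrite cv.
  by exists (exist _ v vW).
Qed.


Lemma pres_twin (V : finType) (E : {set {set V}}) (A : finType) (c : V -> option A) v w :
  pres E c -> twin E v w -> c v = c w.
Proof.
case=> [_ c2 _] tw; case cw: (c w) => [a|].
  have := c2 w v; rewrite cw => h; exact: (h ltac:(done)).2 (twin_sym tw).
case cv: (c v) => [b|//].
have := (c2 v w); rewrite cv cw => h; have := (h _).2 tw; by move=> /(_ ltac:(done)).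
Qed.

Lemma contr_twin (V : finType) (E : {set {set V}}) (W : {set V}) v w :
  contractible E W -> v \in W -> w \in W -> twin E v w.
Proof.
case/andP=> _ /forallP h vW wW e he; have := h e; rewrite he /= => /orP [/subsetP s|d].
  by rewrite !s.
by rewrite (disjointFr d vW) (disjointFr d wW).
Qed.

Lemma fwd_contr (V : finType) (E : {set {set V}}) (W W' : {set V}) (A : finType)
  (c : V -> option A) :
  no_isolated E -> contractible E W -> W' \subset W -> W' != set0 -> pres E c ->
  pres (pb (fun x : {x : V | x \in ~: (W :\: W')} => val x) E) (c \o val) /\
  (forall r, cmod (pb (fun x : {x : V | x \in ~: (W :\: W')} => val x) E) (c \o val) r
     <-> cmod E c r).
Proof.
move=> ni ct sub ne pc.
set D := W :\: W'.
have vinj : injective (fun x : {x : V | x \in ~: D} => val x) := val_inj.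
have [w0 w0W'] := set0Pn _ ne.
have w0W : w0 \in W by apply: (subsetP sub).
have w0D : w0 \notin D by rewrite inE w0W' .
have DW v : v \in D -> v \in W by case/setDP.
apply: pb_pres => //.
- move=> p Mp; have [b s] : _ /\ _ := Mp.
  set m := \sum_(v in D) p v.
  have m0 : 0 <= m by apply: sumr_ge0 => v _; case/andP: (b v).
  set h := fun v => (if v \in D then 0 else p v) + (v == w0)%:R * m.
  have nout v : (forall x : {x : V | x \in ~: D}, val x != v) -> h v = 0.
    move=> hx; have vD : v \in D.
      apply/negPn/negP => vD; have vD' : v \in ~: D by rewrite inE vD.
      by have := hx (exist _ v vD'); rewrite eqxx.
    rewrite /h vD add0r; case: (eqVneq v w0) => [vw|_]; last by rewrite mul0r.
    by move: w0D; rewrite -vw vD.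
  have hsum (P : pred V) : (forall v, v \in D -> P v = P w0) ->
      \sum_(v | P v) h v = \sum_(v | P v) p v.
    move=> PD; rewrite /h big_split /= sum_ind [RHS](bigID (mem D)) /=.
    rewrite [X in X + _ = _](bigID (mem D)) /= big1 ?add0r; last first.
      by move=> v /andP [_ ->].
    rewrite addrC; congr (_ + _).
      by apply: eq_bigr => v /andP [_ /negbTE ->].
    case Pw: (P w0); last first.
      rewrite mul0r big_pred0 // => v; case vD: (v \in D); rewrite ?andbF //.
      by rewrite PD // Pw.
    rewrite mul1r /m; apply: eq_bigl => v; case vD: (v \in D); rewrite ?andbF ?andbT //.
    by rewrite PD // Pw.
  have h0 v : 0 <= h v.
    rewrite /h; apply: addr_ge0; first by case: (v \in D) => //; case/andP: (b v).
    by apply: mulr_ge0.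
  exists (h \o val); split.
  + apply: model_of; first exact: pb_noiso.
      by move=> x; apply: h0.
    move=> e' /imsetP [e he ->].
    rewrite (eq_bigl (fun x => val x \in e)); last by move=> x; rewrite inE.
    rewrite (@sum_pb _ _ _ vinj h (mem e)) // hsum ?s // => v /DW vW.
    by apply: contr_twin ct vW w0W e he.
  + move=> x; rewrite /h /=; have := valP x; rewrite inE => /negbTE ->.
    by rewrite lerDl; apply: mulr_ge0.
  + move=> a; rewrite (@sum_pb _ _ _ vinj h (fun v => c v == Some a)) // hsum //.
    by move=> v /DW vW; rewrite (pres_twin pc (contr_twin ct vW w0W)).
- move=> a; have [_ _ c3] := pc; have [v cv] := c3 a.
  case vD: (v \in D).
    have w0D' : w0 \in ~: D by rewrite inE w0D.
    exists (exist _ w0 w0D').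
    by rewrite /= -(pres_twin pc (contr_twin ct (DW _ vD) w0W)).
  have vD' : v \in ~: D by rewrite inE vD.
  by exists (exist _ v vD').
Qed.


Lemma pres_exists (V : finType) (E : {set {set V}}) :
  exists (A : finType) (c : V -> option A), pres E c.
Proof.
pose nz v := `[< ~ zero_weighted R E v >].
pose twinb v w := [forall e in E, (v \in e) == (w \in e)].
have twinbP v w : reflect (twin E v w) (twinb v w).
  apply: (iffP forallP) => [h e he|h e]; first by have := h e; rewrite he => /eqP.
  by apply/implyP => he; rewrite h.
pose canon v := odflt v [pick w | nz w && twinb v w].
have canon_spec v : nz v -> nz (canon v) /\ twin E v (canon v).
  move=> nzv; rewrite /canon; case: pickP => [w /andP [nw /twinbP tw] //|].
  by move=> /(_ v); rewrite nzv /=; have /twinbP -> := @twin_refl _ E v.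
have canon_eq v w : nz v -> twin E v w -> canon v = canon w.
  move=> nzv tw; rewrite /canon (@eq_pick _ _ (fun u => nz u && twinb w u)).
    case: pickP => // /(_ v); rewrite nzv /=.
    by have /twinbP -> := twin_sym tw.
  move=> u; congr (_ && _); apply/twinbP/twinbP.
    by move=> h; apply: twin_trans (twin_sym tw) h.
  by move=> h; apply: twin_trans tw h.
have nz_twin v w : nz v -> twin E v w -> nz w.
  move=> /asboolP nzv tw; apply/asboolP; exact: twin_nz nzv tw.
pose P v := nz v && (canon v == v).
have Pcanon v : nz v -> P (canon v).
  move=> nzv; have [nzc tw] := canon_spec v nzv.
  by rewrite /P nzc -(canon_eq _ _ nzv tw) eqxx.
pose c v : option {v : V | P v} := if nz v then insub (canon v) else None.
have cS v : nz v -> exists u : {v : V | P v}, c v = Some u /\ val u = canon v.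
  move=> nzv; rewrite /c nzv; case: insubP => [u _ vu|]; first by exists u.
  by rewrite Pcanon.
exists {v : V | P v}, c; split.
- move=> v; case nzv: (nz v).
  + have [u [-> _]] := cS v nzv; split=> // hz; move: nzv; rewrite /nz; by case: asboolP.
  + rewrite /c nzv; split=> // _; apply: contrapT => h.
    by move: nzv; rewrite /nz; case: asboolP.
- move=> v w cv; have nzv : nz v by move: cv; rewrite /c; case: (nz v).
  have [u [cvu vu]] := cS v nzv; rewrite cvu; split.
  + move=> cw; have nzw : nz w by move: cw; rewrite /c; case: (nz w).
    have [u' [cwu' wu']] := cS w nzw; move: cw; rewrite cwu' => -[eu].
    have [_ t1] := canon_spec v nzv; have [_ t2] := canon_spec w nzw.
    apply: twin_trans t1 _; rewrite -vu -eu wu'; exact: twin_sym.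
  + move=> tw; have nzw := nz_twin v w nzv tw.
    have [u' [-> wu']] := cS w nzw; congr Some; apply: val_inj.
    by rewrite wu' vu (canon_eq _ _ nzv tw).
- move=> a; have /andP [nza /eqP ca] := valP a.
  have [u [cu uc]] := cS (val a) nza; exists (val a); rewrite cu; congr Some.
  by apply: val_inj; rewrite uc ca.
Qed.


Lemma pres_map (V : finType) (E : {set {set V}}) (A1 A2 : finType)
  (c1 : V -> option A1) (c2 : V -> option A2) :
  pres E c1 -> pres E c2 ->
  exists phi : A2 -> A1, forall a2 v, (c2 v == Some a2) = (c1 v == Some (phi a2)).
Proof.
case=> [z1 t1 s1] [z2 t2 s2].
have h a2 : exists a1, exists v, c2 v = Some a2 /\ c1 v = Some a1.
  have [v cv] := s2 a2; case cv1: (c1 v) => [a1|]; first by exists a1, v.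
  by move/z1: cv1 => /z2; rewrite cv.
have [phi hphi] := choice h; exists phi => a2 v.
have [v0 [e2 e1]] := hphi a2.
have n2 : c2 v0 <> None by rewrite e2.
have n1 : c1 v0 <> None by rewrite e1.
rewrite -e2 -e1; apply/eqP/eqP.
- by move/(t2 _ _ n2)/(t1 _ _ n1).
- by move/(t1 _ _ n1)/(t2 _ _ n2).
Qed.

Lemma pres_unique (V : finType) (E : {set {set V}}) (A1 A2 : finType)
  (c1 : V -> option A1) (c2 : V -> option A2) :
  pres E c1 -> pres E c2 -> OE (cmod E c1) (cmod E c2).
Proof.
move=> p1 p2; have [phi hphi] := pres_map p1 p2; have [psi hpsi] := pres_map p2 p1.
exists phi; split.
  exists psi.
  - move=> a2; have [_ _ s2] := p2; have [v0 cv0] := s2 a2.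
    have := hphi a2 v0; rewrite cv0 eqxx => /esym /eqP e1.
    have := hpsi (phi a2) v0; rewrite e1 eqxx cv0 => /esym /eqP [] //.
  - move=> a1; have [_ _ s1] := p1; have [v0 cv0] := s1 a1.
    have := hpsi a1 v0; rewrite cv0 eqxx => /esym /eqP e2.
    have := hphi (psi a1) v0; rewrite e2 eqxx cv0 => /esym /eqP [] //.
move=> q; split.
- case=> p [Mp hq]; exists (fun a1 => \sum_(v | c1 v == Some a1) p v); split.
    by exists p.
  by move=> a2; rewrite hq /=; apply: eq_bigl => v; rewrite hphi.
- case=> r [[p [Mp hr]] hq]; exists p; split => // a2.
  by rewrite hq /= hr; apply: eq_bigl => v; rewrite hphi.
Qed.


Lemma cstep_pres (S T : scenario) : contr_step S T ->
  forall (A : finType) (c : projT1 S -> option A), pres (projT2 S) c ->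
  exists g : projT1 T -> projT1 S, pres (projT2 T) (c \o g) /\
    forall r, cmod (projT2 T) (c \o g) r <-> cmod (projT2 S) c r.
Proof.
case=> V E W W' ni ct sub ne A c pc /=; exists val.
exact: fwd_contr.
Qed.

Lemma vstep_pres (S T : scenario) : vcz_step R S T ->
  forall (A : finType) (c : projT1 S -> option A), pres (projT2 S) c ->
  exists c' : projT1 T -> option A, pres (projT2 T) c' /\
    forall r, cmod (projT2 T) c' r <-> cmod (projT2 S) c r.
Proof.
case=> [V E F ni nf vi|S' T' cs|V E W ni zw|V V' E f ni bf] A c pc /=.
- by exists c; apply: fwd_virt.
- by have [g [h1 h2]] := cstep_pres cs pc; exists (c \o g).
- by exists (c \o val); apply: fwd_zero.
- by exists (c \o f); apply: fwd_relabel.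
Qed.

Lemma chain (S T : scenario) : vcz_equiv R S T ->
  forall (A B : finType) (c : projT1 S -> option A) (d : projT1 T -> option B),
  pres (projT2 S) c -> pres (projT2 T) d -> OE (cmod (projT2 S) c) (cmod (projT2 T) d).
Proof.
elim=> {S T} [S T st|S|S T _ IH|S U T _ IH1 _ IH2] A B c d pc pd.
- have [c' [pc' hc']] := vstep_pres st pc.
  apply: OE_trans (pres_unique pc' pd).
  by apply: OE_id => r; rewrite hc'.
- exact: pres_unique.
- exact: OE_sym (IH _ _ _ _ pd pc).
- have [C [e pe]] := pres_exists (projT2 U).
  exact: OE_trans (IH1 _ _ _ _ pc pe) (IH2 _ _ _ _ pe pd).
Qed.


Lemma reach_pres (S T : scenario) : contr_reach S T ->
  forall (A : finType) (c : projT1 S -> option A), pres (projT2 S) c ->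
  exists c' : projT1 T -> option A, [/\ pres (projT2 T) c',
    (forall r, cmod (projT2 T) c' r <-> cmod (projT2 S) c r) &
    ((forall x, c x <> None) -> forall y, c' y <> None)].
Proof.
elim=> {S T} [S T st|S|S U T _ IH1 _ IH2] A c pc.
- have [g [h1 h2]] := cstep_pres st pc; exists (c \o g); split => // tot y; exact: tot.
- by exists c; split.
- have [c1 [p1 m1 t1]] := IH1 A c pc; have [c2 [p2 m2 t2]] := IH2 A c1 p1.
  exists c2; split => //.
  + by move=> r; rewrite m2 m1.
  + by move=> tot; apply: t2; apply: t1.
Qed.

Definition shrinkP (T : scenario) := no_isolated (projT2 T) ->
  forall (A : finType) (c : projT1 T -> option A), pres (projT2 T) c ->
  (forall x, c x <> None) ->
  exists T', contr_reach T T' /\ (#|projT1 T'| <= #|A|)%N.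

Lemma shrink_step (T : scenario) :
  (forall T1 : scenario, (#|projT1 T1| < #|projT1 T|)%N -> shrinkP T1) -> shrinkP T.
Proof.
case: T => V E /= IH ni A c pc tot.
case: (boolP [exists v, exists w, (c v == c w) && (v != w)]).
- case/existsP=> v /existsP [w /andP [/eqP cvw vw]].
  have [_ t2 _] := pc.
  have tw : twin E v w by apply/(t2 v w (tot v)).
  set W := [set v; w]; set W' := [set v].
  have ct : contractible E W.
    apply/andP; split; first by apply/set0Pn; exists v; rewrite /W set21.
    apply/forallP => e; apply/implyP => he; case ve: (v \in e).
      apply/orP; left; apply/subsetP => u; rewrite /W in_set2.
      by case/orP => /eqP ->; rewrite -?(tw e he) ve.
    apply/orP; right; rewrite -setI_eq0; apply/eqP/setP => u.
    rewrite inE /W in_set2 inE; case: (eqVneq u v) => [->|_]; first by rewrite ve.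
    by case: (eqVneq u w) => [->|//]; rewrite -(tw e he) ve.
  have sub : W' \subset W by rewrite sub1set /W set21.
  have ne : W' != set0 by apply/set0Pn; exists v; rewrite /W' set11.
  have cs := CStep ni ct sub ne.
  have [g [pg mg]] := cstep_pres cs pc.
  have DW : W :\: W' = [set w].
    apply/setP => u; rewrite !inE; case: (eqVneq u w) => [->|uw].
      by rewrite orbT andbT eq_sym.
    by rewrite orbF; case: (u == v).
  have card1 : #|projT1 (induced E (~: (W :\: W')))|.+1 = #|V|.
    by rewrite /= DW card_sig -(cardsC [set w]) cards1 add1n; congr S.
  have noi : no_isolated (projT2 (induced E (~: (W :\: W')))).
    exact: (pb_noiso (fun x : {x : V | x \in ~: (W :\: W')} => val x) ni).
  have lt1 : (#|projT1 (induced E (~: (W :\: W')))| < #|V|)%N by rewrite -card1.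
  have [T' [r' c']] := IH _ lt1 noi A (c \o g) pg (fun x => tot (g x)).
  exists T'; split => //; apply: rt_trans r'; exact: rt_step.
- move=> /existsPn ninj.
  have cinj : injective c.
    move=> x y cxy; have := ninj x; move/existsPn/(_ y); rewrite cxy eqxx /= negbK.
    by move/eqP.
  exists (mkScen E); split; first exact: rt_refl.
  have -> : #|A| = #|[set: A]| by rewrite cardsT.
  have -> : #|projT1 (mkScen E)| = #|[set: V]| by rewrite cardsT.
  rewrite -(card_imset [set: V] cinj) -(card_imset [set: A] (@Some_inj _)); apply: subset_leq_card.
  apply/subsetP => _ /imsetP [x _ ->]; case cx: (c x) => [a|]; last by have := tot x.
  by apply/imsetP; exists a; rewrite ?inE.
Qed.

Lemma shrink n (T : scenario) : (#|projT1 T| <= n)%N -> shrinkP T.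
Proof.
elim: n T => [|n IH] T hT; apply: shrink_step => T1 h1.
- by move: (leq_trans h1 hT).
- by apply: IH; rewrite -ltnS; apply: leq_trans h1 hT.
Qed.

Lemma tight (V : finType) (E : {set {set V}}) (A : finType) (c : V -> option A) :
  pres E c -> (forall x, c x <> None) -> (#|V| <= #|A|)%N ->
  OE (is_model E) (cmod E c).
Proof.
move=> [_ _ s3] tot hcard.
have [g hg] := choice s3.
have ginj : injective g.
  by move=> a b gab; have := hg a; rewrite gab hg => -[].
have [g' K1 K2] := inj_card_bij ginj hcard.
have key a v : (c v == Some a) = (v == g a).
  apply/eqP/eqP => [cv|->]; last exact: hg.
  by rewrite -(K2 v) hg in cv; case: cv => <-; rewrite K2.
exists g; split; first exact: (Bijective K1 K2).
move=> r; split.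
- case=> p [Mp hr]; exists p; split => // a; rewrite hr /=.
  by apply: big_pred1 => v; rewrite /= key.
- case=> p [Mp hr]; exists p; split => // a; rewrite hr /=.
  by rewrite (big_pred1 (g a)) // => v; rewrite /= key.
Qed.

Lemma compl_models (V : finType) (E EK : {set {set V}}) (p : V -> R) :
  virt_incl R EK (completion R E) -> (is_model EK p <-> is_model E p).
Proof.
move=> vi; rewrite (virt_models p vi); split=> [[b s]|[b s]]; split=> // e he.
- by apply: s; rewrite inE; apply/asboolP => q [_ sq]; apply: sq.
- by move: he; rewrite inE => /asboolP; apply.
Qed.

Lemma choice_oe (S K : scenario) : no_isolated (projT2 S) -> is_vcz_choice R S K ->
  forall (A : finType) (c : projT1 S -> option A), pres (projT2 S) c ->
  OE (is_model (projT2 K)) (cmod (projT2 S) c).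
Proof.
move=> ni [Z [HZ [H1 [reach [minim [EK [-> [noK [vK _]]]]]]]]] A c pc.
have zW : forall v, v \notin Z -> zero_weighted R (projT2 S) v.
  move=> v vZ; apply: contrapT => nz; by move: vZ; rewrite (proj2 (HZ v) nz).
have [p0 m0] := fwd_zero zW pc.
have tot0 : forall x : {x : projT1 S | x \in Z}, c (val x) <> None.
  move=> x; have [c1 _ _] := pc; move/c1; apply/(HZ (val x)); exact: valP.
have [c1 [p1 m1 t1]] := reach_pres reach p0.
have noi : no_isolated (projT2 (induced (projT2 S) Z)).
  exact: (pb_noiso (fun x : {x : projT1 S | x \in Z} => val x) ni).
have [T' [r' card']] := @shrink _ (induced (projT2 S) Z) (leqnn _) noi _ _ p0 tot0.
have hc : (#|projT1 H1| <= #|A|)%N := leq_trans (minim _ r') card'.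
have o1 : OE (is_model EK) (is_model (projT2 H1)).
  by apply: OE_id => p; apply: compl_models.
have o2 : OE (cmod (projT2 H1) c1) (cmod (projT2 S) c).
  apply: OE_id => r; split => h; first by apply/m0; apply/m1.
  by apply/m1; apply/m0.
exact: OE_trans o1 (OE_trans (tight p1 (t1 tot0) hc) o2).
Qed.

End Main.

Theorem theorem2p1 (R : realType) (H1 H2 : scenario) :
  no_isolated (projT2 H1) -> no_isolated (projT2 H2) ->
  vcz_equiv R H1 H2 ->
  forall K1 K2 : scenario,
    is_vcz_choice R H1 K1 -> is_vcz_choice R H2 K2 ->
    obs_equiv R K1 K2.
Proof.
move=> n1 n2 eq K1 K2 ch1 ch2.
have [A [c pc]] := pres_exists R (projT2 H1).
have [B [d pd]] := pres_exists R (projT2 H2).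
have o1 := choice_oe n1 ch1 pc.
have o2 := choice_oe n2 ch2 pd.
have o12 := chain eq pc pd.
exact: OE_trans o1 (OE_trans o12 (OE_sym o2)).
Qed.
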